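(* Let $n\ge 2$, let $p>2$ be a prime, $M=(p-1)/2$, and let $\delta>0$ and $R>0$ be parameters such that $R\le n/\delta$, $\frac{n-1}{\delta^2}+n\left(\frac{R}{\delta}+\frac14\right)\le M$, and $|\tilde z_j^{(i)}|\le R$ for all $i\in\{1,2\}$, $j\in\{1,\dots,n\}$. Then the Exact Correlation Protocol (described in the context) implements the computation of the sample Pearson correlation $r$ with controlled leakage for the leakage function $$\ell(\mathbf{x}^{(1)},\mathbf{x}^{(2)})=\Big((\varepsilon_j^{(1)},\varepsilon_j^{(2)})_{j=1}^n,\ \sum_{j=1}^n z_j^{(1)}\varepsilon_j^{(2)},\ \sum_{j=1}^n z_j^{(2)}\varepsilon_j^{(1)}\Big),$$ against a passive (honest-but-curious), computationally unbounded adversary corrupting one of the two participants, assuming the participants have access to an ideal Beaver-triple functionality $\mathcal{F}_{\mathrm{BT}}$.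
   Context: Fixed-point encoding: for a prime $p>2$ and $M=(p-1)/2$, and $\delta>0$, let $\mathbb{Q}_{(M,\delta)}=\{x\delta : x\in\mathbb{Z},\ -M\le x\le M\}$. Define $\varphi_\delta:\mathbb{Q}_{(M,\delta)}\to\mathbb{F}_p$ by $\varphi_\delta(x\delta)=x \bmod p$; it is a bijection with inverse $\varphi_\delta^{-1}(y)=\delta\psi(y)$, where, representing $y\in\mathbb{F}_p$ by an integer in $\{0,\dots,p-1\}$, $\psi(y)=y$ if $y\le M$ and $\psi(y)=y-p$ otherwise. Data: participant $P_i$ ($i=1,2$) privately holds real samples $\mathbf{x}^{(i)}=(x_1^{(i)},\dots,x_n^{(i)})$ (not all equal). Let $\bar x^{(i)}$ be their mean, $s^{(i)}=\sqrt{\frac{1}{n-1}\sum_{j=1}^n(x_j^{(i)}-\bar x^{(i)})^2}$, and $z_j^{(i)}=(x_j^{(i)}-\bar x^{(i)})/s^{(i)}$. The sample Pearson correlation is $r=\frac{1}{n-1}\sum_{j=1}^n z_j^{(1)}z_j^{(2)}$. Each $z_j^{(i)}$ is rounded to a nearest element $\tilde z_j^{(i)}\in\mathbb{Q}_{(M,\delta)}$ and $\varepsilon_j^{(i)}=z_j^{(i)}-\tilde z_j^{(i)}\in[-\delta/2,\delta/2]$. Additive secret sharing: a sharing $[x]$ of $x\in\mathbb{F}_p$ consists of shares $[x]_1,[x]_2\in\mathbb{F}_p$, held by $P_1,P_2$, with $[x]_1+[x]_2=x$; the sharer picks one share uniformly at random. $\mathcal{F}_{\mathrm{BT}}$ supplies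 fresh Beaver triples: sharings $[u],[v],[w]$ with $u,v$ uniform in $\mathbb{F}_p$ and $w=uv$. To multiply $[x],[y]$ with a fresh triple, the participants open $x-u$ and $y-v$, and set $[z]_1=[w]_1+[u]_1(y-v)+[v]_1(x-u)+(x-u)(y-v)$, $[z]_2=[w]_2+[u]_2(y-v)+[v]_2(x-u)$, giving a sharing of $xy$. Exact Correlation Protocol: (1) $P_i$ computes $s^{(i)}$, $z_j^{(i)}$, $\tilde z_j^{(i)}$, $\varepsilon_j^{(i)}$ and sends $(\varepsilon_j^{(i)})_{j=1}^n$ to $P_{3-i}$. (2) $P_i$ computes $\sum_{j=1}^n z_j^{(i)}\varepsilon_j^{(3-i)}$ and sends it to $P_{3-i}$. (3) For each $j$, $P_i$ creates and distributes a sharing $[\varphi_\delta(\tilde z_j^{(i)})]$. (4) The participants compute $[a]=\sum_{j=1}^n[\varphi_\delta(\tilde z_j^{(1)})][\varphi_\delta(\tilde z_j^{(2)})]$ using one Beaver triple per product and local addition of shares. (5) $P_i$ sends $[a]_i$ to $P_{3-i}$; both recover $a$. (6) Each participant outputs $\frac{1}{n-1}\Big(\varphi_{\delta^2}^{-1}(a)+\sum_{i=1}^2\sum_{j=1}^n z_j^{(i)}\varepsilon_j^{(3-i)}-\sum_{j=1}^n\varepsilon_j^{(1)}\varepsilon_j^{(2)}\Big)$. Controlled leakage: In the real world, both participants first send their inputs to a null sink $\mathcal{N}$ (which discards them and replies nothing), then run the protocol using $\mathcal{F}_{\mathrm{BT}}$; $V^\ell_{\mathsf{real}}$ is the view (everything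 seen) of the corrupted participant. In the ideal world, both participants first send their inputs to a leaker $\mathcal{L}$, which gives $\ell(\mathbf{x}^{(1)},\mathbf{x}^{(2)})$ to a simulator $\mathcal{S}$; the honest participant gives its input to an ideal functionality $\mathcal{F}_r$ which outputs $r$ to both; the corrupted participant runs the protocol, but all messages from the honest party and from $\mathcal{F}_{\mathrm{BT}}$ are produced by $\mathcal{S}$, which may extract and submit the corrupted participant's input to $\mathcal{F}_r$ and receive $r$; $V^\ell_{\mathsf{ideal}}$ is the corrupted participant's view. The protocol implements the computation with controlled leakage (for $\ell$) if there is a simulator such that $\Pr[\mathcal{D}(V^\ell_{\mathsf{real}})=\mathsf{real}]=\Pr[\mathcal{D}(V^\ell_{\mathsf{ideal}})=\mathsf{real}]$ for every distinguisher $\mathcal{D}$. *)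

(* Defs.v *)
From HB Require Import structures.
From mathcomp Require Import all_boot all_order all_algebra.
From mathcomp Require Import reals.
Set Implicit Arguments. Unset Strict Implicit. Unset Printing Implicit Defensive.
Import Order.TTheory GRing.Theory Num.Theory.
Local Open Scope ring_scope.

Section Defs.
Variables (R : realType) (n p : nat).

Definition mean (x : 'I_n -> R) : R := (\sum_(j < n) x j) / n%:R.
Definition sdev (x : 'I_n -> R) : R :=
  Num.sqrt ((\sum_(j < n) (x j - mean x) ^+ 2) / (n.-1)%:R).
Definition zscore (x : 'I_n -> R) (j : 'I_n) : R := (x j - mean x) / sdev x.
Definition pearson (x1 x2 : 'I_n -> R) : R :=
  (\sum_(j < n) zscore x1 j * zscore x2 j) / (n.-1)%:R.
Definition nonconst (x : 'I_n -> R) : Prop := exists j k : 'I_n, x j <> x k.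

Definition Mp : nat := (p.-1)./2.
Definition inQ (delta q : R) : Prop :=
  exists k : int, - (Mp%:Z) <= k <= Mp%:Z /\ q = k%:~R * delta.
Definition nearest_rounding (delta : R) (rnd : R -> R) : Prop :=
  forall t : R, inQ delta (rnd t) /\
    (forall q, inQ delta q -> `|t - rnd t| <= `|t - q|).
(** phi_delta (x delta) = x mod p  (only used on elements of Q_(M,delta)) *)
Definition phi (delta q : R) : 'F_p := (Num.floor (q / delta))%:~R.
Definition psi (y : 'F_p) : int :=
  if (val y <= Mp)%N then (val y)%:Z else (val y)%:Z - p%:Z.
Definition phiinv (delta : R) (y : 'F_p) : R := delta * (psi y)%:~R.

Variables (delta : R) (rnd : R -> R).
Definition ztil (x : 'I_n -> R) (j : 'I_n) : R := rnd (zscore x j).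
Definition eps (x : 'I_n -> R) (j : 'I_n) : R := zscore x j - ztil x j.
Definition cross (xa xb : 'I_n -> R) : R := \sum_(j < n) zscore xa j * eps xb j.

(** per index j: (r1, r2, (u, v), (su, sv, sw)) where
   r1 = share of phi(z~^(1)_j) that P1 sends to P2 (P1 keeps phi(..) - r1),
   r2 = share of phi(z~^(2)_j) that P2 sends to P1 (P2 keeps phi(..) - r2),
   u, v = Beaver triple values (w = u v),
   su, sv, sw = P1's shares of u, v, w (P2 gets u - su, v - sv, uv - sw). *)
Definition coin : finType := ('F_p * 'F_p * ('F_p * 'F_p) * ('F_p * 'F_p * 'F_p))%type.
Definition coins : finType := {ffun 'I_n -> coin}.

Definition c_r1 (w : coin) : 'F_p := let: (r1, _, _, _) := w in r1.
Definition c_r2 (w : coin) : 'F_p := let: (_, r2, _, _) := w in r2.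
Definition c_u  (w : coin) : 'F_p := let: (_, _, (u, _), _) := w in u.
Definition c_v  (w : coin) : 'F_p := let: (_, _, (_, v), _) := w in v.
Definition c_su (w : coin) : 'F_p := let: (_, _, _, (su, _, _)) := w in su.
Definition c_sv (w : coin) : 'F_p := let: (_, _, _, (_, sv, _)) := w in sv.
Definition c_sw (w : coin) : 'F_p := let: (_, _, _, (_, _, sw)) := w in sw.

Section Run.
Variables (x1 x2 : 'I_n -> R) (om : coins).
Definition xF (j : 'I_n) : 'F_p := phi delta (ztil x1 j).
Definition yF (j : 'I_n) : 'F_p := phi delta (ztil x2 j).
Definition xs1 j := xF j - c_r1 (om j).
Definition xs2 j := c_r1 (om j).
Definition ys1 j := c_r2 (om j).
Definition ys2 j := yF j - c_r2 (om j).
Definition us1 j := c_su (om j).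
Definition us2 j := c_u (om j) - c_su (om j).
Definition vs1 j := c_sv (om j).
Definition vs2 j := c_v (om j) - c_sv (om j).
Definition ws1 j := c_sw (om j).
Definition ws2 j := c_u (om j) * c_v (om j) - c_sw (om j).
Definition d1 j := xs1 j - us1 j.
Definition d2 j := xs2 j - us2 j.
Definition e1 j := ys1 j - vs1 j.
Definition e2 j := ys2 j - vs2 j.
Definition dd j := d1 j + d2 j.
Definition ee j := e1 j + e2 j.
Definition zs1 j := ws1 j + us1 j * ee j + vs1 j * dd j + dd j * ee j.
Definition zs2 j := ws2 j + us2 j * ee j + vs2 j * dd j.
Definition as1 : 'F_p := \sum_(j < n) zs1 j.
Definition as2 : 'F_p := \sum_(j < n) zs2 j.
Definition protocol_output : R :=
  (phiinv (delta ^+ 2) (as1 + as2) + (cross x1 x2 + cross x2 x1)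
     - \sum_(j < n) eps x1 j * eps x2 j) / (n.-1)%:R.
End Run.

(** messages the corrupted party receives from the honest party and from F_BT *)
Record msgs := Msgs {
  m_eps : 'I_n -> R;                      (* step 1: eps^(h) *)
  m_cross : R;                            (* step 2: sum_j z^(h)_j eps^(c)_j *)
  m_shares : 'I_n -> 'F_p;                (* step 3: shares of the honest party's sharings *)
  m_triple : 'I_n -> 'F_p * 'F_p * 'F_p;  (* step 4: own shares of u_j, v_j, w_j from F_BT *)
  m_open : 'I_n -> 'F_p * 'F_p;           (* step 4: honest shares of x_j - u_j and y_j - v_j *)
  m_a : 'F_p                              (* step 5: honest share of a *)
}.
Record view := View {
  v_input : 'I_n -> R;
  v_coins : 'I_n -> 'F_p;
  v_msgs : msgs
}.

(** real view; c = true : P1 corrupted, c = false : P2 corrupted *)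
Definition real_view (c : bool) (x1 x2 : 'I_n -> R) (om : coins) : view :=
  if c then
    View x1 (fun j => c_r1 (om j))
      (Msgs (eps x2) (cross x2 x1) (fun j => c_r2 (om j))
         (fun j => (us1 om j, vs1 om j, ws1 om j))
         (fun j => (d2 om j, e2 x2 om j)) (as2 x1 x2 om))
  else
    View x2 (fun j => c_r2 (om j))
      (Msgs (eps x1) (cross x1 x2) (fun j => c_r1 (om j))
         (fun j => (us2 om j, vs2 om j, ws2 om j))
         (fun j => (d1 x1 om j, e1 om j)) (as1 x1 x2 om)).

Record leak := Leak {
  l_eps1 : 'I_n -> R; l_eps2 : 'I_n -> R; l_cross12 : R; l_cross21 : R }.
Definition leakage (x1 x2 : 'I_n -> R) : leak :=
  Leak (eps x1) (eps x2) (cross x1 x2) (cross x2 x1).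

(** ideal view: the corrupted party's input and uniformly random own coins;
   all other messages produced by the simulator, which gets the leakage, the
   corrupted party's input and coins (i.e. everything it sends), r from F_r,
   and its own uniform randomness from a finite type ST. *)
Definition ideal_view (ST : finType)
  (Sim : leak -> ('I_n -> R) -> {ffun 'I_n -> 'F_p} -> R -> ST -> msgs)
  (c : bool) (x1 x2 : 'I_n -> R) (t : {ffun 'I_n -> 'F_p} * ST) : view :=
  let xc := if c then x1 else x2 in
  View xc (fun j => t.1 j) (Sim (leakage x1 x2) xc t.1 (pearson x1 x2) t.2).

End Defs.

Definition prob (R : realType) (T : finType) (P : pred T) : R :=
  #|[pred t | P t]|%:R / #|T|%:R.

(* Main.v *)
Require Import Defs.
From HB Require Import structures.
From mathcomp Require Import all_boot all_order all_algebra.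
From mathcomp Require Import reals.
From mathcomp Require Import ring lra zify.
From Stdlib Require Import FunctionalExtensionality.
Import Order.TTheory GRing.Theory Num.Theory.
Local Open Scope ring_scope.

Lemma Mp_odd p : prime p -> (2 < p)%N -> p = (Mp p).*2.+1.
Proof.
move=> pp p2; have [p2'|op] := even_prime pp; first by rewrite p2' in p2.
rewrite /Mp; case: p op {pp p2} => // p /= op.
by rewrite -{1}(odd_double_half p) (negbTE op) add0n.
Qed.

Lemma valF p m : prime p -> val (m%:R : 'F_p) = (m %% p)%N.
Proof. move=> pp; exact: (val_Fp_nat pp m). Qed.

Lemma psi_int p (K : int) : prime p -> (2 < p)%N ->
  - (Mp p)%:Z <= K <= (Mp p)%:Z -> psi (K%:~R : 'F_p) = K.
Proof.
move=> pp p2 /andP[Kl Kr]; have hp := Mp_odd _ pp p2.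
rewrite /psi; case: K Kl Kr => [m|m] Kl Kr.
  have mM : (m <= Mp p)%N by lia.
  have -> : (m%:Z%:~R : 'F_p) = m%:R by [].
  by rewrite valF // modn_small ?mM //; lia.
have -> : ((Negz m)%:~R : 'F_p) = (p - m.+1)%N%:R.
  by rewrite NegzE mulrNz natrB ?pchar_Fp_0 ?sub0r //; lia.
rewrite valF // modn_small; last by lia.
have -> : (p - m.+1 <= Mp p)%N = false by lia.
rewrite NegzE; lia.
Qed.

Lemma sumz2 (R : realType) n (x : 'I_n -> R) : (2 <= n)%N -> nonconst x ->
  \sum_(j < n) zscore x j ^+ 2 = (n.-1)%:R.
Proof.
move=> n2 [j [k xjk]].
set S := \sum_(j < n) (x j - mean x) ^+ 2.
have S0 : 0 <= S by apply: sumr_ge0 => i _; apply: sqr_ge0.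
have Sn0 : S != 0.
  apply/negP => /eqP /psumr_eq0P H.
  have H' : forall i, x i = mean x.
    move=> i; apply/eqP; rewrite -subr_eq0 -sqrf_eq0; apply/eqP.
    by apply: H => // ? _; apply: sqr_ge0.
  by apply: xjk; rewrite !H'.
have n1 : (n.-1)%:R != 0 :> R by rewrite pnatr_eq0; lia.
have sd2 : sdev x ^+ 2 = S / (n.-1)%:R.
  rewrite /sdev sqr_sqrtr // divr_ge0 //.
have -> : \sum_(j < n) zscore x j ^+ 2 = S / sdev x ^+ 2.
  rewrite /S mulr_suml; apply: eq_bigr => i _.
  by rewrite /zscore expr_div_n.
rewrite sd2; field; apply/andP; split => //.
Qed.

Lemma eps_bound (R : realType) n p (delta : R) rnd (x : 'I_n -> R) :
  (2 <= n)%N -> nonconst x -> 0 < delta -> (1 <= Mp p)%N ->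
  (n.-1)%:R <= (Mp p)%:R * delta ^+ 2 ->
  nearest_rounding p delta rnd -> forall j, `|eps rnd x j| <= delta / 2.
Proof.
move=> n2 nc d0 M1 hM hr j.
set t := zscore x j.
have t2 : t ^+ 2 <= (n.-1)%:R.
  rewrite -(@sumz2 _ _ x n2 nc) (bigD1 j) //= lerDl.
  by apply: sumr_ge0 => i _; apply: sqr_ge0.
have M1' : 1 <= (Mp p)%:R :> R by rewrite ler1n.
set m := (Mp p)%:R : R.
have md : m * delta ^+ 2 <= (m * delta) ^+ 2.
  have : 0 <= (m - 1) * (m * delta ^+ 2).
    by apply: mulr_ge0; [lra | apply: mulr_ge0; [lra | apply: sqr_ge0]].
  move=> h; rewrite exprMn; lra.
have md0 : 0 < m * delta by apply: mulr_gt0 => //; lra.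
have ht : `|t| <= m * delta.
  rewrite ler_norml; apply/andP; split; rewrite leNgt; apply/negP => h; nra.
set y := t / delta.
have ty : t = y * delta by rewrite /y divfK // gt_eqF.
have hy : `|y| <= (Mp p)%:R.
  by rewrite /y normf_div (gtr0_norm d0) ler_pdivrMr.
set k := Num.floor (y + 1/2).
have [kl kr] : k%:~R <= y + 1/2 /\ y + 1/2 < (k + 1)%:~R.
  by have /andP[] := floor_itv (y + 1/2).
have inq : inQ p delta (k%:~R * delta).
  exists k; split => //; apply/andP; split.
    rewrite /k floor_ge_int; move: hy; rewrite ler_norml => /andP[h1 h2].
    rewrite mulrNz; lra.
  have : k < (Mp p)%:Z + 1.
    rewrite /k floor_lt_int; move: hy; rewrite ler_norml => /andP[h1 h2].
    rewrite intrD; lra.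
  lia.
have [_ /(_ _ inq) hq] := hr t.
rewrite /eps /ztil -/t; apply: le_trans hq _.
rewrite intrD in kr.
rewrite ler_norml ty; apply/andP; split; nra.
Qed.

Lemma ab_le (R : realType) (a b : R) : `|a * b| <= (a ^+ 2 + b ^+ 2) / 2.
Proof.
have h1 : 0 <= (a - b) ^+ 2 by apply: sqr_ge0.
have h2 : 0 <= (a + b) ^+ 2 by apply: sqr_ge0.
rewrite ler_norml; apply/andP; split; nra.
Qed.

Lemma sum_z1z2 (R : realType) n (x1 x2 : 'I_n -> R) : (2 <= n)%N ->
  nonconst x1 -> nonconst x2 ->
  `|\sum_(j < n) zscore x1 j * zscore x2 j| <= (n.-1)%:R.
Proof.
move=> n2 c1 c2; apply: le_trans; first exact: ler_norm_sum.
apply: le_trans.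
  by apply: ler_sum => j _; apply: ab_le.
rewrite -mulr_suml big_split /= (@sumz2 _ _ x1) // (@sumz2 _ _ x2) //; lra.
Qed.


Lemma prob_bij (R : realType) (T1 T2 : finType) (g : T1 -> T2) (P : pred T2) (Q : pred T1) :
 bijective g -> (forall t, P (g t) = Q t) -> prob R [pred x | P x] = prob R [pred t | Q t].
Proof.
move=> bg hPQ; rewrite /prob (bij_eq_card bg); congr (_%:R / _).
rewrite -!sum1_card (reindex g) /=; last exact: onW_bij.
by apply: eq_bigl => t; rewrite !inE /= hPQ.
Qed.


Lemma as_sum (R : realType) n p delta rnd (x1 x2 : 'I_n -> R) (om : coins n p) :
  as1 delta rnd x1 x2 om + as2 delta rnd x1 x2 om =
  \sum_(j < n) xF p delta rnd x1 j * yF p delta rnd x2 j.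
Proof.
rewrite /as1 /as2 -big_split; apply: eq_bigr => j _.
rewrite /zs1 /zs2 /dd /ee /d1 /d2 /e1 /e2 /xs1 /xs2 /ys1 /ys2 /ws1 /ws2 /us1 /us2 /vs1 /vs2 /=.
ring.
Qed.

Lemma ztil_int (R : realType) n p (delta : R) rnd (x : 'I_n -> R) j :
  0 < delta -> nearest_rounding p delta rnd ->
  ztil rnd x j = (Num.floor (ztil rnd x j / delta))%:~R * delta.
Proof.
move=> d0 hr; rewrite /ztil; have [[k [_ ->]] _] := hr (zscore x j).
by rewrite mulfK ?gt_eqF // intrKfloor.
Qed.

Lemma phiE (R : realType) n p (delta : R) rnd (x : 'I_n -> R) j :
  phi p delta (ztil rnd x j) = (Num.floor (ztil rnd x j / delta))%:~R.
Proof. by []. Qed.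


Lemma aK (R : realType) n p (delta : R) rnd (x1 x2 : 'I_n -> R) :
  0 < delta -> nearest_rounding p delta rnd -> (2 <= n)%N ->
  phi p (delta ^+ 2) ((n.-1)%:R * pearson x1 x2 - cross rnd x1 x2 - cross rnd x2 x1
     + \sum_(j < n) eps rnd x1 j * eps rnd x2 j)
  = \sum_(j < n) xF p delta rnd x1 j * yF p delta rnd x2 j.
Proof.
move=> d0 hr n2.
set k1 := fun j => Num.floor (ztil rnd x1 j / delta).
set k2 := fun j => Num.floor (ztil rnd x2 j / delta).
set K := \sum_(j < n) k1 j * k2 j.
have hk1 j : ztil rnd x1 j = (k1 j)%:~R * delta by exact: ztil_int.
have hk2 j : ztil rnd x2 j = (k2 j)%:~R * delta by exact: ztil_int.
have hKr : \sum_(j < n) ztil rnd x1 j * ztil rnd x2 j = delta ^+ 2 * K%:~R.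
  rewrite /K (big_morph _ (@intrD _) (mulr0z 1)) mulr_sumr.
  apply: eq_bigr => j _; rewrite hk1 hk2 intrM; ring.
have n1 : (n.-1)%:R != 0 :> R by rewrite pnatr_eq0; lia.
have hq : (n.-1)%:R * pearson x1 x2 - cross rnd x1 x2 - cross rnd x2 x1
     + \sum_(j < n) eps rnd x1 j * eps rnd x2 j
     = \sum_(j < n) ztil rnd x1 j * ztil rnd x2 j.
  rewrite /pearson mulrC divfK // /cross -!sumrB -big_split /=.
  by apply: eq_bigr => j _; rewrite /eps; ring.
rewrite hq hKr /phi [delta ^+ 2 * _]mulrC mulfK ?expf_neq0 ?gt_eqF // intrKfloor.
rewrite /K (big_morph _ (@intrD _) (mulr0z 1)).
by apply: eq_bigr => j _; rewrite intrM.
Qed.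

Definition tup6 p := ('F_p * 'F_p * 'F_p * 'F_p * 'F_p * 'F_p)%type.
Definition ST6 (n p : nat) : finType := {ffun 'I_n -> 'F_p * 'F_p * 'F_p * 'F_p * 'F_p * 'F_p}.

Definition aS (R : realType) n p (delta : R) (L : leak R n) (r : R) : 'F_p :=
  phi p (delta ^+ 2) ((n.-1)%:R * r - l_cross12 L - l_cross21 L
     + \sum_(j < n) l_eps1 L j * l_eps2 L j).

Definition z1S p (xf r1 : 'F_p) (s : tup6 p) : 'F_p :=
  let: (r2, su, sv, sw, d2, e2) := s in
  let dd := (xf - r1 - su) + d2 in let ee := (r2 - sv) + e2 in
  sw + su * ee + sv * dd + dd * ee.

Definition Sim1 (R : realType) n p (delta : R) (rnd : R -> R) (L : leak R n)
  (xc : 'I_n -> R) (r1f : {ffun 'I_n -> 'F_p}) (r : R) (st : ST6 n p) : msgs R n p :=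
  Msgs (l_eps2 L) (l_cross21 L) (fun j => (st j).1.1.1.1.1)
   (fun j => ((st j).1.1.1.1.2, (st j).1.1.1.2, (st j).1.1.2))
   (fun j => ((st j).1.2, (st j).2))
   (@aS R n p delta L r - \sum_(j < n) z1S p (phi p delta (rnd (zscore xc j))) (r1f j) (st j)).

Definition gc1 p (yf r1 : 'F_p) (s : tup6 p) : coin p :=
  let: (r2, su, sv, sw, d2, e2) := s in
  (r1, r2, (r1 + su - d2, yf - r2 + sv - e2), (su, sv, sw)).
Definition hc1 p (yf : 'F_p) (w : coin p) : tup6 p :=
  let: (r1, r2, (u, v), (su, sv, sw)) := w in
  (r2, su, sv, sw, r1 - u + su, yf - r2 - v + sv).

Lemma sec1 (R : realType) (n p : nat) (delta : R) (rnd : R -> R) :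
  (2 <= n)%N -> 0 < delta -> nearest_rounding p delta rnd ->
  forall x1 x2 : 'I_n -> R, 
     forall D : view R n p -> bool,
       prob R [pred om : coins n p | D (real_view delta rnd true x1 x2 om)]
       = prob R [pred t : {ffun 'I_n -> 'F_p} * ST6 n p |
                   D (ideal_view rnd (@Sim1 R n p delta rnd) true x1 x2 t)].
Proof.
move=> n2 d0 hr x1 x2 D.
pose g (t : {ffun 'I_n -> 'F_p} * ST6 n p) : coins n p :=
  [ffun j => gc1 p (yF p delta rnd x2 j) (t.1 j) (t.2 j)].
pose h (om : coins n p) : {ffun 'I_n -> 'F_p} * ST6 n p :=
  ([ffun j => c_r1 (om j)], [ffun j => hc1 p (yF p delta rnd x2 j) (om j)]).
have bg : bijective g.
  exists h.
    move=> [t1 t2]; rewrite /g /h /=; congr (_, _); apply/ffunP => j; rewrite !ffunE.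
      by case: (t2 j) => [[[[[? ?] ?] ?] ?] ?].
    case: (t2 j) => [[[[[r2 su] sv] sw] d2] e2] /=.
    congr (_, _, _, _, _, _); ring.
  move=> om; apply/ffunP => j; rewrite /g /h !ffunE /=.
  case: (om j) => [[[r1 r2] [u v]] [[su sv] sw]] /=.
  congr (_, _, (_, _), _); ring.
apply: (@prob_bij R _ _ g (fun om => D (real_view delta rnd true x1 x2 om))
   (fun t => D (ideal_view rnd (@Sim1 R n p delta rnd) true x1 x2 t)) bg) => t.
congr (D _).
rewrite /real_view /ideal_view /=.
congr View.
  by apply: functional_extensionality => j; rewrite /g ffunE; case: (t.2 j) => [[[[[? ?] ?] ?] ?] ?].
rewrite /Sim1; congr Msgs.
- by apply: functional_extensionality => j; rewrite /g ffunE; case: (t.2 j) => [[[[[? ?] ?] ?] ?] ?].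
- by apply: functional_extensionality => j; rewrite /g /us1 /vs1 /ws1 ffunE; case: (t.2 j) => [[[[[? ?] ?] ?] ?] ?].
- apply: functional_extensionality => j; rewrite /g /d2 /e2 /xs2 /us2 /ys2 /vs2 ffunE.
  case: (t.2 j) => [[[[[r2 su] sv] sw] d2] e2] /=.
  congr (_, _); ring.
have -> : as2 delta rnd x1 x2 (g t) =
   (as1 delta rnd x1 x2 (g t) + as2 delta rnd x1 x2 (g t)) - as1 delta rnd x1 x2 (g t) by ring.
rewrite as_sum /aS /= aK //; congr (_ - _).
apply: eq_bigr => j _.
rewrite /zs1 /dd /ee /d1 /d2 /e1 /e2 /xs1 /xs2 /ys1 /ys2 /ws1 /us1 /vs1 /us2 /vs2 /g ffunE.
rewrite /xF /ztil.
case: (t.2 j) => [[[[[r2 su] sv] sw] d2] e2] /=.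
ring.
Qed.

Definition z2S p (yf r2 : 'F_p) (s : tup6 p) : 'F_p :=
  let: (r1, U2, V2, W2, d1, e1) := s in
  W2 + U2 * (e1 + (yf - r2 - V2)) + V2 * (d1 + (r1 - U2)).

Definition Sim2 (R : realType) n p (delta : R) (rnd : R -> R) (L : leak R n)
  (xc : 'I_n -> R) (r2f : {ffun 'I_n -> 'F_p}) (r : R) (st : ST6 n p) : msgs R n p :=
  Msgs (l_eps1 L) (l_cross12 L) (fun j => (st j).1.1.1.1.1)
   (fun j => ((st j).1.1.1.1.2, (st j).1.1.1.2, (st j).1.1.2))
   (fun j => ((st j).1.2, (st j).2))
   (@aS R n p delta L r - \sum_(j < n) z2S p (phi p delta (rnd (zscore xc j))) (r2f j) (st j)).

Definition gc2 p (xf r2 : 'F_p) (s : tup6 p) : coin p :=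
  let: (r1, U2, V2, W2, d1, e1) := s in
  (r1, r2, (U2 + (xf - r1 - d1), V2 + (r2 - e1)),
   (xf - r1 - d1, r2 - e1, (U2 + (xf - r1 - d1)) * (V2 + (r2 - e1)) - W2)).
Definition hc2 p (xf : 'F_p) (w : coin p) : tup6 p :=
  let: (r1, r2, (u, v), (su, sv, sw)) := w in
  (r1, u - su, v - sv, u * v - sw, xf - r1 - su, r2 - sv).

Lemma sec2 (R : realType) (n p : nat) (delta : R) (rnd : R -> R) :
  (2 <= n)%N -> 0 < delta -> nearest_rounding p delta rnd ->
  forall x1 x2 : 'I_n -> R, 
     forall D : view R n p -> bool,
       prob R [pred om : coins n p | D (real_view delta rnd false x1 x2 om)]
       = prob R [pred t : {ffun 'I_n -> 'F_p} * ST6 n p |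
                   D (ideal_view rnd (@Sim2 R n p delta rnd) false x1 x2 t)].
Proof.
move=> n2 d0 hr x1 x2 D.
pose g (t : {ffun 'I_n -> 'F_p} * ST6 n p) : coins n p :=
  [ffun j => gc2 p (xF p delta rnd x1 j) (t.1 j) (t.2 j)].
pose h (om : coins n p) : {ffun 'I_n -> 'F_p} * ST6 n p :=
  ([ffun j => c_r2 (om j)], [ffun j => hc2 p (xF p delta rnd x1 j) (om j)]).
have bg : bijective g.
  exists h.
    move=> [t1 t2]; rewrite /g /h /=; congr (_, _); apply/ffunP => j; rewrite !ffunE.
      by case: (t2 j) => [[[[[? ?] ?] ?] ?] ?].
    case: (t2 j) => [[[[[r1 U2] V2] W2] d1] e1] /=.
    congr (_, _, _, _, _, _); ring.
  move=> om; apply/ffunP => j; rewrite /g /h !ffunE /=.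
  case: (om j) => [[[r1 r2] [u v]] [[su sv] sw]] /=.
  congr (_, _, (_, _), (_, _, _)); ring.
apply: (@prob_bij R _ _ g (fun om => D (real_view delta rnd false x1 x2 om))
   (fun t => D (ideal_view rnd (@Sim2 R n p delta rnd) false x1 x2 t)) bg) => t.
congr (D _).
rewrite /real_view /ideal_view /=.
congr View.
  by apply: functional_extensionality => j; rewrite /g ffunE; case: (t.2 j) => [[[[[? ?] ?] ?] ?] ?].
rewrite /Sim2; congr Msgs.
- by apply: functional_extensionality => j; rewrite /g ffunE; case: (t.2 j) => [[[[[? ?] ?] ?] ?] ?].
- apply: functional_extensionality => j; rewrite /g /us2 /vs2 /ws2 ffunE.
  case: (t.2 j) => [[[[[r1 U2] V2] W2] d1] e1] /=.
  congr (_, _, _); ring.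
- apply: functional_extensionality => j; rewrite /g /d1 /e1 /xs1 /us1 /ys1 /vs1 ffunE.
  case: (t.2 j) => [[[[[r1 U2] V2] W2] d1] e1] /=.
  congr (_, _); ring.
have -> : as1 delta rnd x1 x2 (g t) =
   (as1 delta rnd x1 x2 (g t) + as2 delta rnd x1 x2 (g t)) - as2 delta rnd x1 x2 (g t) by ring.
rewrite as_sum /aS /= aK //; congr (_ - _).
apply: eq_bigr => j _.
rewrite /zs2 /dd /ee /d1 /d2 /e1 /e2 /xs1 /xs2 /ys1 /ys2 /ws2 /us1 /vs1 /us2 /vs2 /g ffunE.
rewrite /yF /xF /ztil.
case: (t.2 j) => [[[[[r1 U2] V2] W2] d1] e1] /=.
ring.
Qed.

Lemma term_bound (R : realType) (a b c d Rb delta : R) :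
  `|a| <= Rb -> `|b| <= Rb -> `|c| <= delta / 2 -> `|d| <= delta / 2 ->
  `|a * d + c * b + c * d| <= Rb * delta + delta ^+ 2 / 4.
Proof.
move=> b1 b2 f1 f2.
have g1 := normr_ge0 a; have g2 := normr_ge0 b.
have g3 := normr_ge0 c; have g4 := normr_ge0 d.
have t1 := ler_normD (a * d + c * b) (c * d).
have t2 := ler_normD (a * d) (c * b).
move: t1 t2; rewrite !normrM => t1 t2.
have h1 := ler_pM g1 g4 b1 f2; have h2 := ler_pM g3 g2 f1 b2; have h3 := ler_pM g3 g4 f1 f2.
have e : Rb * delta + delta ^+ 2 / 4 = Rb * (delta / 2) + delta / 2 * Rb + delta / 2 * (delta / 2) by field.
rewrite e; lra.
Qed.

Lemma correct (R : realType) (n p : nat) (delta Rb : R) (rnd : R -> R) :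
  (2 <= n)%N -> prime p -> (2 < p)%N -> 0 < delta -> 0 < Rb ->
  (n.-1)%:R / delta ^+ 2 + n%:R * (Rb / delta + 1 / 4) <= (Mp p)%:R ->
  nearest_rounding p delta rnd ->
  (forall x1 x2 : 'I_n -> R, nonconst x1 -> nonconst x2 ->
     (forall j, `|ztil rnd x1 j| <= Rb /\ `|ztil rnd x2 j| <= Rb) ->
     forall om : coins n p, protocol_output delta rnd x1 x2 om = pearson x1 x2).
Proof.
move=> n2 pp p2 d0 Rb0 hM hr x1 x2 c1 c2 hb om.
have hp := Mp_odd _ pp p2.
have M1 : (1 <= Mp p)%N by lia.
set M := (Mp p)%:R : R.
have hM' : (n.-1)%:R + n%:R * Rb * delta + n%:R * delta ^+ 2 / 4 <= M * delta ^+ 2.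
  have -> : (n.-1)%:R + n%:R * Rb * delta + n%:R * delta ^+ 2 / 4 =
     ((n.-1)%:R / delta ^+ 2 + n%:R * (Rb / delta + 1 / 4)) * delta ^+ 2.
    by field; rewrite gt_eqF.
  by apply: ler_wpM2r => //; apply: sqr_ge0.
have n0 : 0 <= n%:R :> R by [].
have hnd : 0 <= n%:R * Rb * delta by apply: mulr_ge0; [apply: mulr_ge0|]; lra.
have hnd2 : 0 <= n%:R * delta ^+ 2 / 4.
  by apply: divr_ge0 => //; apply: mulr_ge0 => //; apply: sqr_ge0.
have hn1 : (n.-1)%:R <= M * delta ^+ 2 by lra.
have e1b := @eps_bound _ _ _ _ _ x1 n2 c1 d0 M1 hn1 hr.
have e2b := @eps_bound _ _ _ _ _ x2 n2 c2 d0 M1 hn1 hr.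
set k1 := fun j => Num.floor (ztil rnd x1 j / delta).
set k2 := fun j => Num.floor (ztil rnd x2 j / delta).
set K := \sum_(j < n) k1 j * k2 j.
have hk1 j : ztil rnd x1 j = (k1 j)%:~R * delta by exact: ztil_int.
have hk2 j : ztil rnd x2 j = (k2 j)%:~R * delta by exact: ztil_int.
have hKr : \sum_(j < n) ztil rnd x1 j * ztil rnd x2 j = delta ^+ 2 * K%:~R.
  rewrite /K (big_morph _ (@intrD _) (mulr0z 1)) mulr_sumr.
  apply: eq_bigr => j _; rewrite hk1 hk2 intrM; ring.
have hKF : as1 delta rnd x1 x2 om + as2 delta rnd x1 x2 om = K%:~R.
  rewrite as_sum /K (big_morph _ (@intrD _) (mulr0z 1)).
  by apply: eq_bigr => j _; rewrite intrM.
have hsplit : \sum_(j < n) ztil rnd x1 j * ztil rnd x2 j =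
   \sum_(j < n) zscore x1 j * zscore x2 j -
   \sum_(j < n) (ztil rnd x1 j * eps rnd x2 j + eps rnd x1 j * ztil rnd x2 j
                  + eps rnd x1 j * eps rnd x2 j).
  rewrite -sumrB; apply: eq_bigr => j _; rewrite /eps; ring.
have hrest : `|\sum_(j < n) (ztil rnd x1 j * eps rnd x2 j + eps rnd x1 j * ztil rnd x2 j
                  + eps rnd x1 j * eps rnd x2 j)| <= n%:R * Rb * delta + n%:R * delta ^+ 2 / 4.
  apply: le_trans; first exact: ler_norm_sum.
  apply: le_trans.
    apply: (@ler_sum _ _ _ _ _ (fun _ => Rb * delta + delta ^+ 2 / 4)) => j _.
    by have [b1 b2] := hb j; apply: term_bound.
  by rewrite sumr_const card_ord -mulr_natl; lra.
have hK : `|delta ^+ 2 * K%:~R| <= M * delta ^+ 2.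
  rewrite -hKr hsplit; apply: le_trans; first exact: ler_normB.
  have := @sum_z1z2 _ _ x1 x2 n2 c1 c2; lra.
have hKM : `|K%:~R : R| <= M.
  rewrite normrM (ger0_norm (sqr_ge0 delta)) mulrC in hK.
  by rewrite -(ler_pM2r (exprn_gt0 2 d0)).
have hKi : - (Mp p)%:Z <= K <= (Mp p)%:Z.
  move: hKM; rewrite ler_norml => /andP[h1 h2].
  apply/andP; split; rewrite -(ler_int R) //.
  by rewrite intrN.
rewrite /protocol_output /pearson hKF /phiinv psi_int // -hKr.
congr (_ / _).
rewrite /cross -!big_split /= -sumrB; apply: eq_bigr => j _; rewrite /eps; ring.
Qed.

Theorem proposition1 (R : realType) (n p : nat) (delta Rb : R) (rnd : R -> R) :
  (2 <= n)%N -> prime p -> (2 < p)%N -> 0 < delta -> 0 < Rb ->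
  Rb <= n%:R / delta ->
  (n.-1)%:R / delta ^+ 2 + n%:R * (Rb / delta + 1 / 4) <= (Mp p)%:R ->
  nearest_rounding p delta rnd ->
  (* correctness: both participants output r *)
  (forall x1 x2 : 'I_n -> R, nonconst x1 -> nonconst x2 ->
     (forall j, `|ztil rnd x1 j| <= Rb /\ `|ztil rnd x2 j| <= Rb) ->
     forall om : coins n p, protocol_output delta rnd x1 x2 om = pearson x1 x2)
  /\
  (* controlled leakage: for each corrupted party there is a simulator *)
  (forall c : bool,
     exists (ST : finType)
            (Sim : leak R n -> ('I_n -> R) -> {ffun 'I_n -> 'F_p} -> R -> ST -> msgs R n p),
     forall x1 x2 : 'I_n -> R, nonconst x1 -> nonconst x2 ->
     (forall j, `|ztil rnd x1 j| <= Rb /\ `|ztil rnd x2 j| <= Rb) ->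
     forall D : view R n p -> bool,
       prob R [pred om : coins n p | D (real_view delta rnd c x1 x2 om)]
       = prob R [pred t : {ffun 'I_n -> 'F_p} * ST |
                   D (ideal_view rnd Sim c x1 x2 t)]).

Proof.
move=> n2 pp p2 d0 Rb0 _ hM hr; split.
  exact: (@correct R n p delta Rb rnd n2 pp p2 d0 Rb0 hM hr).
case.
  exists (ST6 n p), (@Sim1 R n p delta rnd) => x1 x2 _ _ _ D.
  exact: (@sec1 R n p delta rnd n2 d0 hr x1 x2 D).
exists (ST6 n p), (@Sim2 R n p delta rnd) => x1 x2 _ _ _ D.
exact: (@sec2 R n p delta rnd n2 d0 hr x1 x2 D).
Qed.
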